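(* Let $S_1,\ldots,S_m$ be propositional formulae ($m\ge 1$). The lexicographic orders $[S_1,\ldots,S_{m-1},S_m]$ and $[S_1,\ldots,S_{m-1}]$ are equivalent if and only if $S_m$ is equivalent to the disjunction of some (possibly none) of the formulae $Q = (B_1 \equiv S_1) \wedge \cdots \wedge (B_{m-1} \equiv S_{m-1})$, where each $B_i$ is either $\top$ or $\bot$.
   Context: Formulae are propositional over a finite alphabet; models are truth assignments. For a formula $F$, the order induced by $F$ is: $I \leq_F J$ iff $I \models F$ or $J \not\models F$. For a finite sequence of formulae $S=[S_1,\ldots,S_m]$, the lexicographic order $\leq_S$ is defined recursively: $I \leq_S J$ holds iff either $S=[]$, or ($I \leq_{S_1} J$ and (either $J \not\leq_{S_1} I$ or $I \leq_R J$)), where $R=[S_2,\ldots,S_m]$. Two sequences $S$ and $R$ are equivalent, written $S\equiv R$, if $I \leq_S J$ and $I\leq_R J$ coincide for all pairs of models $I,J$. The empty disjunction is $\bot$. *)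

(* Defs.v *)
From mathcomp Require Import all_boot.
Set Implicit Arguments. Unset Strict Implicit. Unset Printing Implicit Defensive.

Inductive formula (A : Type) : Type :=
| FVar of A
| FTop
| FBot
| FNeg of formula A
| FAnd of formula A & formula A
| FOr of formula A & formula A
| FImp of formula A & formula A
| FIff of formula A & formula A.
Arguments FTop {A}. Arguments FBot {A}.

Fixpoint eval (A : Type) (I : A -> bool) (F : formula A) : bool :=
  match F with
  | FVar a => I a
  | FTop => true
  | FBot => false
  | FNeg G => ~~ eval I G
  | FAnd G H => eval I G && eval I H
  | FOr G H => eval I G || eval I H
  | FImp G H => eval I G ==> eval I H
  | FIff G H => eval I G == eval I H
  end.

Definition fequiv (A : Type) (F G : formula A) : Prop :=
  forall I : A -> bool, eval I F = eval I G.

Definition leF (A : Type) (F : formula A) (I J : A -> bool) : bool :=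
  eval I F || ~~ eval J F.

Fixpoint leS (A : Type) (S : seq (formula A)) (I J : A -> bool) : bool :=
  match S with
  | [::] => true
  | F :: R => leF F I J && (~~ leF F J I || leS R I J)
  end.

Definition sequiv (A : Type) (S R : seq (formula A)) : Prop :=
  forall I J : A -> bool, leS S I J = leS R I J.

Definition bigOr (A : Type) (l : seq (formula A)) : formula A := foldr (@FOr A) FBot l.
Definition bigAnd (A : Type) (l : seq (formula A)) : formula A := foldr (@FAnd A) FTop l.

Definition constF (A : Type) (b : bool) : formula A := if b then FTop else FBot.

Definition Qform (A : Type) (S : seq (formula A)) (B : seq bool) : formula A :=
  bigAnd [seq FIff (constF A p.1) p.2 | p <- zip B S].

(* Main.v *)
Require Import Defs.
From mathcomp Require Import all_boot.

Lemma leS_rcons (A : Type) (S : seq (formula A)) F I J :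
  leS (rcons S F) I J =
  if map (eval I) S == map (eval J) S then leF F I J else leS S I J.
Proof.
elim: S => [|G S IH] /=; first by rewrite /leF; case: (eval I F); case: (eval J F).
rewrite eqseq_cons IH /leF.
by case: (eval I G); case: (eval J G); case: (_ == _).
Qed.

Lemma leS_same (A : Type) (S : seq (formula A)) I J :
  map (eval I) S = map (eval J) S -> leS S I J.
Proof.
elim: S => [|G S IH] //= [e1 /IH ->]; rewrite /leF e1.
by case: (eval J G); rewrite ?orbT.
Qed.

Lemma eval_Q (A : Type) (S : seq (formula A)) (B : seq bool) I :
  size B = size S -> eval I (Qform S B) = (map (eval I) S == B).
Proof.
elim: S B => [|G S IH] [|b B] //= [hs].
rewrite /Qform /= -/(Qform S B) IH // eqseq_cons.
by case: b; case: (eval I G).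
Qed.

Lemma eval_bigOr (A : Type) (l : seq (formula A)) I :
  eval I (bigOr l) = has (fun F => eval I F) l.
Proof. by elim: l => //= F l ->. Qed.

Lemma eval_ext (A : Type) (I J : A -> bool) F :
  (forall a, I a = J a) -> eval I F = eval J F.
Proof. by move=> h; elim: F => /= [a|||G ->|G -> H ->|G -> H ->|G -> H ->|G -> H ->]. Qed.

Theorem theorem3 (A : finType) (S : seq (formula A)) (Sm : formula A) :
  sequiv (rcons S Sm) S <->
  exists Bs : seq ((size S).-tuple bool),
    fequiv Sm (bigOr [seq Qform S (tval B) | B <- Bs]).
Proof.
split.
- move=> H.
  have key : forall I J : A -> bool, map (eval I) S = map (eval J) S ->
      eval J Sm -> eval I Sm.
    move=> I J e hJ; have := H I J; rewrite leS_rcons e eqxx leS_same //.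
    by rewrite /leF hJ orbF.
  exists [seq map_tuple (fun F => eval (fun a => f a) F) (in_tuple S)
         | f : {ffun A -> bool} <- enum {ffun A -> bool} & eval (fun a => f a) Sm].
  move=> I; rewrite eval_bigOr !has_map.
  apply/idP/idP.
  + move=> hI; apply/hasP; exists [ffun a => I a].
      by rewrite mem_filter mem_enum andbT (@eval_ext _ _ I) // => a; rewrite ffunE.
    rewrite /= eval_Q ?size_map //=; apply/eqP/eq_map => F.
    by apply: eval_ext => a; rewrite ffunE.
  + case/hasP => f; rewrite mem_filter => /andP [hf _].
    rewrite /= eval_Q ?size_map // => /eqP e.
    by apply: (key I (fun a => f a)).
- case=> Bs hB I J; rewrite leS_rcons.
  case: eqP => // e; rewrite leS_same // /leF !hB !eval_bigOr !has_map.
  have -> : has (fun B => eval I (Qform S (tval B))) Bs =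
            has (fun B => eval J (Qform S (tval B))) Bs.
    by apply: eq_has => B /=; rewrite !eval_Q ?size_tuple // e.
  by case: has.
Qed.
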